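(* Let $n\ge1$, let $f_1,\dots,f_n:\mathbb{R}^d\to\mathbb{R}$ be $L$-smooth (i.e. $\|\nabla f_i(x)-\nabla f_i(y)\|\le L\|x-y\|$ for all $x,y$), and $f=\frac1n\sum_i f_i$. Let $x_0,x_1,\dots,x_T$ and $\nabla_0,\dots,\nabla_{T-1}$ be the iterates and gradient estimators produced by AdaSpider (described in the context) with input $x_0$, $\beta_0>0$, $G_0>0$. Then there is an absolute constant $C>0$ such that, for every realization of the random choices, \[ \sum_{t=0}^{T-1}\|\nabla_t\|^2\le C\, n^2T^3\Big(\frac{L^2}{\beta_0^2}+\|\nabla f(x_0)\|^2\Big). \]
   Context: $\|\cdot\|$ is the Euclidean norm. AdaSpider: input $x_0\in\mathbb{R}^d$, $\beta_0>0$, $G_0>0$, horizon $T\ge1$. For $t=0,1,\dots,T-1$: if $t \bmod n=0$, set $\nabla_t:=\nabla f(x_t)$; otherwise pick $i_t\in\{1,\dots,n\}$ uniformly at random (independently of the past) and set $\nabla_t:=\nabla f_{i_t}(x_t)-\nabla f_{i_t}(x_{t-1})+\nabla_{t-1}$. Then set $\gamma_t:=1\big/\big(n^{1/4}\beta_0\sqrt{n^{1/2}G_0^2+\sum_{s=0}^t\|\nabla_s\|^2}\big)$ and $x_{t+1}:=x_t-\gamma_t\nabla_t$. *)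

(* Defs.v *)
From HB Require Import structures.
From mathcomp Require Import all_boot all_order all_algebra.
From mathcomp Require Import all_classical all_reals all_analysis.
Set Implicit Arguments. Unset Strict Implicit. Unset Printing Implicit Defensive.
Import Order.TTheory GRing.Theory Num.Theory.
Import numFieldNormedType.Exports.
Local Open Scope ring_scope.

Section AdaSpider.
Variable R : realType.

Definition dotv (d : nat) (u v : 'rV[R]_d) : R := \sum_(j < d) u 0 j * v 0 j.
Definition enorm (d : nat) (v : 'rV[R]_d) : R := Num.sqrt (dotv v v).

Definition is_gradient (d : nat) (f : 'rV[R]_d -> R) (g : 'rV[R]_d -> 'rV[R]_d) :=
  forall x, differentiable f x /\ forall h, 'd f x h = dotv (g x) h.

Definition lipschitz_grad (d : nat) (g : 'rV[R]_d -> 'rV[R]_d) (L : R) :=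
  forall x y, enorm (g x - g y) <= L * enorm (x - y).

Definition fullgrad (n d : nat) (g : 'I_n -> 'rV[R]_d -> 'rV[R]_d) (x : 'rV[R]_d)
  : 'rV[R]_d := n%:R^-1 *: \sum_(i < n) g i x.

Definition ada_gamma (n : nat) (beta0 G0 S : R) : R :=
  (Num.sqrt (Num.sqrt n%:R) * beta0 *
   Num.sqrt (Num.sqrt n%:R * G0 ^+ 2 + S))^-1.

(* State at time t : (x_t, nabla_t, S_t) with S_t = sum_{s<=t} ||nabla_s||^2.
   idx t is the (arbitrary realization of the) random index i_t. *)
Fixpoint ada_state (n d : nat) (g : 'I_n -> 'rV[R]_d -> 'rV[R]_d)
  (idx : nat -> 'I_n) (x0 : 'rV[R]_d) (beta0 G0 : R) (t : nat)
  : 'rV[R]_d * 'rV[R]_d * R :=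
  match t with
  | 0 => let nab := fullgrad g x0 in (x0, nab, enorm nab ^+ 2)
  | t'.+1 =>
      let: (x, nab, Ssum) := ada_state g idx x0 beta0 G0 t' in
      let x' := x - ada_gamma n beta0 G0 Ssum *: nab in
      let nab' := if (t'.+1 %% n == 0)%N then fullgrad g x'
                  else g (idx t'.+1) x' - g (idx t'.+1) x + nab in
      (x', nab', Ssum + enorm nab' ^+ 2)
  end.

Definition ada_x n d g idx x0 beta0 G0 t : 'rV[R]_d :=
  (@ada_state n d g idx x0 beta0 G0 t).1.1.
Definition ada_grad n d g idx x0 beta0 G0 t : 'rV[R]_d :=
  (@ada_state n d g idx x0 beta0 G0 t).1.2.

End AdaSpider.

(* Main.v *)
Require Import Defs.
From HB Require Import structures.
From mathcomp Require Import all_boot all_order all_algebra.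
From mathcomp Require Import all_classical all_reals all_analysis.
From mathcomp Require Import ring lra.
Import Order.TTheory GRing.Theory Num.Theory.
Import numFieldNormedType.Exports.
Local Open Scope ring_scope.

Section H.
Variable R : realType.
Variable d : nat.
Implicit Types u v : 'rV[R]_d.

Lemma dotv_ge0 v : 0 <= dotv v v.
Proof. by apply: sumr_ge0 => j _; rewrite -expr2 sqr_ge0. Qed.

Lemma enorm_ge0 v : 0 <= enorm v.
Proof. exact: sqrtr_ge0. Qed.

Lemma enorm_sq v : enorm v ^+ 2 = dotv v v.
Proof. by rewrite /enorm sqr_sqrtr // dotv_ge0. Qed.

Lemma enormZ (c : R) v : enorm (c *: v) = `|c| * enorm v.
Proof.
rewrite /enorm /dotv.
have -> : \sum_(j < d) (c *: v) 0 j * (c *: v) 0 j = c ^+ 2 * \sum_(j < d) v 0 j * v 0 j.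
  rewrite mulr_sumr; apply: eq_bigr => j _; rewrite !mxE; ring.
by rewrite sqrtrM ?sqr_ge0 // sqrtr_sqr.
Qed.

Lemma enormN v : enorm (- v) = enorm v.
Proof. by rewrite -scaleN1r enormZ normrN normr1 mul1r. Qed.

Lemma enorm0 : enorm (0 : 'rV[R]_d) = 0.
Proof. by rewrite -(scale0r (0 : 'rV[R]_d)) enormZ normr0 mul0r. Qed.

Lemma CS u v : dotv u v ^+ 2 <= dotv u u * dotv v v.
Proof.
pose a i := u 0 i; pose b i := v 0 i.
have e1 : dotv u u * dotv v v = \sum_(i < d) \sum_(j < d) (a i * a i) * (b j * b j).
  by rewrite /dotv big_distrlr.
have e2 : dotv u u * dotv v v = \sum_(i < d) \sum_(j < d) (a j * a j) * (b i * b i).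
  rewrite mulrC /dotv big_distrlr; apply: eq_bigr => i _; apply: eq_bigr => j _.
  exact: mulrC.
have e3 : dotv u v ^+ 2 = \sum_(i < d) \sum_(j < d) (a i * b i) * (a j * b j).
  by rewrite expr2 /dotv big_distrlr.
have H : 0 <= \sum_(i < d) \sum_(j < d) (a i * b j - a j * b i) ^+ 2.
  by apply: sumr_ge0 => i _; apply: sumr_ge0 => j _; rewrite sqr_ge0.
have E : \sum_(i < d) \sum_(j < d) (a i * b j - a j * b i) ^+ 2
   = dotv u u * dotv v v + dotv u u * dotv v v - 2 * dotv u v ^+ 2.
  rewrite {1}e1 e2 e3 mulr_sumr -big_split -sumrB /=.
  apply: eq_bigr => i _; rewrite mulr_sumr -big_split -sumrB /=.
  by apply: eq_bigr => j _; rewrite /a /b; ring.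
rewrite E in H; lra.
Qed.

Lemma enormD u v : enorm (u + v) <= enorm u + enorm v.
Proof.
have Hd : dotv (u + v) (u + v) = dotv u u + dotv v v + 2 * dotv u v.
  rewrite /dotv mulr_sumr -!big_split /=; apply: eq_bigr => j _; rewrite !mxE; ring.
have Hc : dotv u v <= enorm u * enorm v.
  apply: (le_trans (ler_norm _)).
  rewrite /enorm -sqrtrM ?dotv_ge0 // -sqrtr_sqr ler_wsqrtr //; exact: CS.
have -> : enorm u + enorm v = Num.sqrt ((enorm u + enorm v) ^+ 2).
  by rewrite sqrtr_sqr ger0_norm // addr_ge0 // enorm_ge0.
rewrite {1}/enorm ler_wsqrtr // Hd sqrrD !enorm_sq; lra.
Qed.

Lemma enormB u v : enorm (u - v) <= enorm u + enorm v.
Proof. by rewrite -(enormN v) enormD. Qed.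

Lemma enorm_sum n (F : 'I_n -> 'rV[R]_d) :
  enorm (\sum_(i < n) F i) <= \sum_(i < n) enorm (F i).
Proof.
apply: (big_ind2 (fun x y => enorm x <= y)); first by rewrite enorm0.
  by move=> x1 x2 y1 y2 h1 h2; apply: (le_trans (enormD _ _)); exact: lerD.
by [].
Qed.
End H.
Arguments dotv_ge0 {R d}. Arguments enorm_ge0 {R d}. Arguments enorm_sq {R d}. Arguments enormZ {R d}. Arguments enormN {R d}. Arguments enorm0 {R d}. Arguments enormD {R d}. Arguments enormB {R d}. Arguments enorm_sum {R d n}.

Section M.
Variable R : realType.
Variables (n d : nat) (L : R) (g : 'I_n -> 'rV[R]_d -> 'rV[R]_d)
  (idx : nat -> 'I_n) (x0 : 'rV[R]_d) (beta0 G0 : R).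
Hypotheses (hn : (1 <= n)%N) (hb : 0 < beta0) (hG : 0 < G0)
  (Lip : forall i, lipschitz_grad (g i) L).

Lemma fullgrad_lip x y :
  enorm (fullgrad g x - fullgrad g y) <= `|L| * enorm (x - y).
Proof.
rewrite /fullgrad -scalerBr -sumrB enormZ.
have H : \sum_(i < n) enorm (g i x - g i y) <= \sum_(i < n) `|L| * enorm (x - y).
  apply: ler_sum => i _; apply: (le_trans (Lip i x y)).
  by apply: ler_wpM2r; [exact: enorm_ge0 | exact: ler_norm].
rewrite sumr_const card_ord -mulr_natl in H.
have hn' : 0 < n%:R :> R by rewrite ltr0n.
rewrite ger0_norm; last by rewrite invr_ge0 ltW.
have H2 := le_trans (enorm_sum (fun i => g i x - g i y)) H.
have hi : 0 <= (n%:R : R)^-1 by rewrite invr_ge0 ltW.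
apply: (le_trans (ler_wpM2l hi H2)).
by rewrite mulKf // gt_eqF.
Qed.

Lemma step_bound S (nab : 'rV[R]_d) : enorm nab ^+ 2 <= S ->
  enorm (ada_gamma n beta0 G0 S *: nab) <= beta0^-1.
Proof.
move=> hS.
have hS0 : 0 <= S by apply: le_trans hS; exact: sqr_ge0.
have hn1 : 1 <= Num.sqrt (n%:R : R).
  by rewrite -[X in X <= _]sqrtr1; apply: ler_wsqrtr; rewrite ler1n.
set k := Num.sqrt (Num.sqrt (n%:R : R)).
have hk : 1 <= k by rewrite /k -[X in X <= _]sqrtr1; apply: ler_wsqrtr.
set s := Num.sqrt (Num.sqrt n%:R * G0 ^+ 2 + S).
have hpos : 0 < Num.sqrt n%:R * G0 ^+ 2 + S.
  by apply: ltr_wpDr => //; apply: mulr_gt0; [lra | exact: exprn_gt0].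
have hs : 0 < s by rewrite /s sqrtr_gt0.
have hes : enorm nab <= s.
  have h0 : 0 <= Num.sqrt (n%:R : R) * G0 ^+ 2 by rewrite mulr_ge0 // ?sqrtr_ge0 ?sqr_ge0.
  rewrite /enorm /s; apply: ler_wsqrtr; rewrite -enorm_sq; lra.
have hks : enorm nab <= k * s by apply: (le_trans hes); rewrite ler_peMl //; lra.
have hg : 0 < ada_gamma n beta0 G0 S.
  rewrite /ada_gamma invr_gt0 -/k -/s; apply: mulr_gt0 => //; apply: mulr_gt0 => //; lra.
rewrite enormZ ger0_norm; last exact: ltW.
apply: (le_trans (ler_wpM2l (ltW hg) hks)).
rewrite /ada_gamma -/k -/s le_eqVlt; apply/orP; left; apply/eqP.
field; apply/and3P; split; rewrite gt_eqF //; lra.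
Qed.

Definition aa := enorm (fullgrad g x0).
Definition bb := `|L| * beta0^-1.

Lemma invariant t :
  let s := ada_state g idx x0 beta0 G0 t in
  enorm (s.1.1 - x0) <= t%:R * beta0^-1 /\
  enorm s.1.2 <= aa + t%:R * bb /\ enorm s.1.2 ^+ 2 <= s.2.
Proof.
elim: t => [|t IH] /=.
  by rewrite subrr enorm0 !mul0r addr0 /aa.
move: IH; case: (ada_state g idx x0 beta0 G0 t) => [[x nab] S] /= [H1 [H2 H3]].
have hst := step_bound S nab H3.
set x' := x - _ *: nab.
have hx : enorm (x' - x) <= beta0^-1.
  by rewrite /x' addrC addKr enormN.
have hL0 : 0 <= `|L| := normr_ge0 L.
have hc : 0 < beta0^-1 by rewrite invr_gt0.
split.
  have -> : x' - x0 = (x - x0) - (ada_gamma n beta0 G0 S *: nab).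
    by rewrite /x' addrAC.
  apply: (le_trans (enormB _ _)); rewrite -natr1; lra.
set nab' := (if _ then _ else _).
have Hn : enorm nab' <= aa + t.+1%:R * bb.
  rewrite /nab' -natr1 /bb; case: ifP => _.
    have := enormD (fullgrad g x0) (fullgrad g x' - fullgrad g x0).
    rewrite addrC subrK => h1; apply: (le_trans h1); rewrite /aa lerD2l.
    apply: (le_trans (fullgrad_lip _ _)).
    have : enorm (x' - x0) <= t%:R * beta0^-1 + beta0^-1.
      have -> : x' - x0 = (x - x0) - (ada_gamma n beta0 G0 S *: nab).
        by rewrite /x' addrAC.
      by apply: (le_trans (enormB _ _)); lra.
    move=> h2; have := ler_wpM2l hL0 h2; nra.
  apply: (le_trans (enormD _ _)).
  have h3 : enorm (g (idx t.+1) x' - g (idx t.+1) x) <= `|L| * beta0^-1.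
    apply: (le_trans (Lip _ _ _)); apply: (le_trans (ler_wpM2r (enorm_ge0 _) (ler_norm L))).
    exact: ler_wpM2l.
  move: H2; rewrite /bb; nra.
split => //.
have := sqr_ge0 (enorm nab); lra.
Qed.
End M.

Theorem lemma2 (R : realType) :
  exists C : R, 0 < C /\
  forall (n d T : nat) (L : R) (f : 'I_n -> 'rV[R]_d -> R)
         (g : 'I_n -> 'rV[R]_d -> 'rV[R]_d)
         (idx : nat -> 'I_n) (x0 : 'rV[R]_d) (beta0 G0 : R),
    (1 <= n)%N -> (1 <= T)%N -> 0 < beta0 -> 0 < G0 ->
    (forall i, is_gradient (f i) (g i)) ->
    (forall i, lipschitz_grad (g i) L) ->
    \sum_(t < T) enorm (ada_grad g idx x0 beta0 G0 t) ^+ 2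
      <= C * (n ^ 2)%:R * (T ^ 3)%:R *
         (L ^+ 2 / beta0 ^+ 2 + enorm (fullgrad g x0) ^+ 2).
Proof.
exists 2; split => // n d T L f g idx x0 beta0 G0 hn hT hb hG _ Lip.
set a := enorm (fullgrad g x0).
set b := `|L| * beta0^-1.
have ha : 0 <= a by exact: enorm_ge0.
have hb0 : 0 <= b by rewrite mulr_ge0 // invr_ge0 ltW.
have hT1 : 1 <= T%:R :> R by rewrite ler1n.
have hn1 : 1 <= n%:R :> R by rewrite ler1n.
have hbb : b ^+ 2 = L ^+ 2 / beta0 ^+ 2 by rewrite /b exprMn real_normK ?num_real // exprVn.
have H : \sum_(t < T) enorm (ada_grad g idx x0 beta0 G0 t) ^+ 2
   <= \sum_(t < T) (2 * T%:R ^+ 2 * (a ^+ 2 + b ^+ 2)).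
  apply: ler_sum => t _.
  have [_ [h _]] := @invariant R n d L g idx x0 beta0 G0 hn hb hG Lip t.
  have ht : t%:R <= T%:R :> R by rewrite ler_nat ltnW.
  have ht0 : 0 <= t%:R :> R by [].
  have he := enorm_ge0 (ada_grad g idx x0 beta0 G0 t).
  rewrite /ada_grad; move: h; rewrite /aa /bb -/a -/b => h.
  have h2 : enorm (ada_state g idx x0 beta0 G0 t).1.2 ^+ 2 <= (a + t%:R * b) ^+ 2.
    have hab : 0 <= a + t%:R * b by rewrite addr_ge0 // mulr_ge0.
    by rewrite ler_sqr ?nnegrE // enorm_ge0.
  apply: (le_trans h2).
  have : t%:R * b <= T%:R * b by exact: ler_wpM2r.
  have : a <= T%:R * a by rewrite ler_peMl.
  move=> h4 h5.
  have h6 : a + t%:R * b <= T%:R * a + T%:R * b by lra.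
  have h7 : (a + t%:R * b) ^+ 2 <= (T%:R * a + T%:R * b) ^+ 2.
    have h9 : 0 <= T%:R * a + T%:R * b :> R by lra.
    have hab : 0 <= a + t%:R * b by rewrite addr_ge0 // mulr_ge0.
    by rewrite ler_sqr ?nnegrE.
  apply: (le_trans h7).
  have h8 : 0 <= (T%:R * a - T%:R * b) ^+ 2 := sqr_ge0 _.
  have -> : 2 * T%:R ^+ 2 * (a ^+ 2 + b ^+ 2) = (T%:R * a + T%:R * b) ^+ 2 + (T%:R * a - T%:R * b) ^+ 2 :> R by ring.
  lra.
apply: (le_trans H); rewrite sumr_const card_ord -hbb.
have E1 : (n ^ 2)%:R = n%:R ^+ 2 :> R by rewrite natrX.
have E2 : (T ^ 3)%:R = T%:R ^+ 3 :> R by rewrite natrX.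
rewrite E1 E2 -[_ *+ T]mulr_natr.
set Q := a ^+ 2 + b ^+ 2.
have hQ : 0 <= Q by rewrite addr_ge0 // sqr_ge0.
have hn2 : 1 <= n%:R ^+ 2 :> R by rewrite expr_ge1 // ltW.
have h0 : 0 <= 2 * T%:R ^+ 3 * Q :> R by rewrite !mulr_ge0 // exprn_ge0.
have -> : 2 * T%:R ^+ 2 * Q * T%:R = 2 * T%:R ^+ 3 * Q :> R by ring.
have -> : 2 * n%:R ^+ 2 * T%:R ^+ 3 * (b ^+ 2 + a ^+ 2) = n%:R ^+ 2 * (2 * T%:R ^+ 3 * Q) :> R by rewrite /Q; ring.
by rewrite ler_peMl.
Qed.
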